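(* Let $G$ be a finite simple graph on the vertex set $[n]$ and let $A$ be a minimal cut set of $G$. Then $A \in \mathcal{C}(G)$. Moreover, if $G$ is a generalized block graph, then for every $T \in \mathcal{C}(G)$, either $A \subseteq T$ or $A \cap T = \emptyset$.
   Context: For $T \subseteq [n]$ let $\overline{T} = [n]\setminus T$, let $G[\overline{T}]$ be the induced subgraph on $\overline{T}$, let $c_G(T)$ be the number of connected components of $G[\overline{T}]$, and let $c_G$ be the number of connected components of $G$. A subset $T \subset [n]$ is a cut set of $G$ if $c_G(T) > c_G$; a minimal cut set is a cut set minimal under inclusion. A vertex $v$ is a cut vertex of a graph $H$ if removing $v$ increases the number of connected components. $T$ has the cut point property if for each $i \in T$, $i$ is a cut vertex of $G[\overline{T}\cup\{i\}]$; $\mathcal{C}(G) = \{\emptyset\} \cup \{T : T \text{ has the cut point property}\}$. The clique complex $\Delta(G)$ is the simplicial complex whose facets are the maximal cliques of $G$. A chordal graph $G$ is a generalized block graph if whenever $F_i, F_j, F_k$ are facets of $\Delta(G)$ with $F_i \cap F_j \cap F_k \neq \emptyset$, then $F_i \cap F_j = F_i \cap F_k = F_j \cap F_k$. *)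

(* Defs.v *)
From mathcomp Require Import all_boot.
Set Implicit Arguments. Unset Strict Implicit. Unset Printing Implicit Defensive.

Definition simple_graph (n : nat) (e : rel 'I_n) : Prop :=
  symmetric e /\ irreflexive e.

Section Graphs.
Variables (n : nat) (e : rel 'I_n).

Definition induced_rel (S : {set 'I_n}) : rel 'I_n :=
  fun x y => [&& e x y, x \in S & y \in S].

Definition comp_of (S : {set 'I_n}) (x : 'I_n) : {set 'I_n} :=
  [set y in S | connect (induced_rel S) x y].

Definition ncomp (S : {set 'I_n}) : nat :=
  #|[set comp_of S x | x in S]|.

Definition cG (T : {set 'I_n}) : nat := ncomp (~: T).
Definition cG0 : nat := ncomp setT.

Definition cut_set (T : {set 'I_n}) : bool := cG0 < cG T.

Definition minimal_cut_set (T : {set 'I_n}) : bool := minset cut_set T.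

Definition cut_vertex (S : {set 'I_n}) (v : 'I_n) : bool :=
  (v \in S) && (ncomp S < ncomp (S :\ v)).

Definition cut_point_property (T : {set 'I_n}) : bool :=
  [forall i in T, cut_vertex (i |: ~: T) i].

Definition cut_point_sets (T : {set 'I_n}) : bool :=
  (T == set0) || cut_point_property T.

Definition clique (K : {set 'I_n}) : bool :=
  [forall x in K, forall y in K, (x != y) ==> e x y].

Definition facet (F : {set 'I_n}) : bool := maxset clique F.

(* chordal: every cycle of length >= 4 (on distinct vertices) has a chord,
   i.e. an edge between two vertices that are not consecutive on the cycle *)
Definition chordal : Prop :=
  forall (x : 'I_n) (p : seq 'I_n), let s := x :: p in
    uniq s -> 4 <= size s -> cycle e s ->
    exists i j : nat, [/\ i < j, j < size s, j != i.+1,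
      ~~ ((i == 0) && (j == (size s).-1)) & e (nth x s i) (nth x s j)].

Definition generalized_block_graph : Prop :=
  chordal /\
  forall Fi Fj Fk : {set 'I_n}, facet Fi -> facet Fj -> facet Fk ->
    Fi != Fj -> Fi != Fk -> Fj != Fk ->
    Fi :&: Fj :&: Fk != set0 ->
    Fi :&: Fj = Fi :&: Fk /\ Fi :&: Fk = Fj :&: Fk.

End Graphs.

(* Main.v *)
Require Import Defs.
From mathcomp Require Import all_boot zify.
From Stdlib Require Import Classical.
Set Implicit Arguments. Unset Strict Implicit. Unset Printing Implicit Defensive.

Notation conn e S := (connect (induced_rel e S)).

Lemma conn_ind (T : finType) (r : rel T) (P : T -> Prop) x y :
  (forall z z', P z -> r z z' -> P z') -> P x -> connect r x y -> P y.
Proof.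
move=> step Px /connectP [p pth ->]; elim: p x Px pth => [|z p IH] x Px //=.
case/andP=> rxz pth; apply: IH pth; exact: step rxz.
Qed.

Lemma induced_sym n (e : rel 'I_n) (S : {set 'I_n}) : symmetric e -> symmetric (induced_rel e S).
Proof. by move=> sym x y; rewrite /induced_rel sym; case: (x \in S); case: (y \in S); rewrite ?andbF. Qed.

Lemma conn_mono n (e : rel 'I_n) (S S' : {set 'I_n}) x y : S \subset S' -> conn e S x y -> conn e S' x y.
Proof.
move=> sub; apply: (conn_ind (P := fun z => conn e S' x z)) => // z z' h.
case/and3P => ezz zS z'S; apply: connect_trans h (connect1 _).
by rewrite /induced_rel ezz (subsetP sub _ zS) (subsetP sub _ z'S).
Qed.

Lemma conn_in n (e : rel 'I_n) (S : {set 'I_n}) x y : x \in S -> conn e S x y -> y \in S.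
Proof.
move=> xS; apply: (conn_ind (P := fun z => z \in S)) => // z z' _.
by case/and3P.
Qed.

Lemma comp_eq n (e : rel 'I_n) (S : {set 'I_n}) x y : symmetric e -> x \in S -> y \in S ->
  (comp_of e S x = comp_of e S y) <-> conn e S x y.
Proof.
move=> sym xS yS; have cs := sym_connect_sym (induced_sym S sym).
split=> [h|h].
  have : y \in comp_of e S y by rewrite inE yS connect0.
  by rewrite -h inE => /andP[].
apply/setP=> z; rewrite !inE; case: (z \in S) => //=.
apply/idP/idP => h2; first by rewrite cs in h; exact: connect_trans h h2.
exact: connect_trans h h2.
Qed.

Lemma card_le (aT rT : finType) (X : {set aT}) (f g : aT -> rT) :
  {in X &, forall x y, g x = g y -> f x = f y} -> #|f @: X| <= #|g @: X|.
Proof.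
move=> H; case: (set_0Vmem X) => [->|[x0 x0X]]; first by rewrite !imset0.
pose h c := f (odflt x0 [pick x in X | g x == c]).
apply: leq_trans (leq_imset_card h _); apply: subset_leq_card.
apply/subsetP => _ /imsetP [x xX ->]; apply/imsetP; exists (g x).
  by apply/imsetP; exists x.
rewrite /h; case: pickP => [y /andP [yX /eqP gy]|H0]; last by move: (H0 x); rewrite /= xX eqxx.
by rewrite /= (H y x).
Qed.

Lemma card_lt (aT rT : finType) (X : {set aT}) (f g : aT -> rT) x0 y0 :
  {in X &, forall x y, g x = g y -> f x = f y} -> x0 \in X -> y0 \in X ->
  f x0 = f y0 -> g x0 != g y0 -> #|f @: X| < #|g @: X|.
Proof.
move=> H x0X y0X fxy gxy.
pose h c := f (odflt x0 [pick x in X | g x == c]).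
have hg x : x \in X -> h (g x) = f x.
  move=> xX; rewrite /h; case: pickP => [y /andP [yX /eqP gy]|H0]; last by move: (H0 x); rewrite /= xX eqxx.
  by rewrite /= (H y x).
apply: (@leq_trans #|h @: (g @: X)|.+1).
  rewrite ltnS; apply: subset_leq_card.
  apply/subsetP => _ /imsetP [x xX ->]; apply/imsetP; exists (g x).
    by apply/imsetP; exists x.
  by rewrite hg.
rewrite ltn_neqAle leq_imset_card andbT; apply/imset_injP => inj.
move/eqP: gxy; apply; apply: inj; [exact: imset_f|exact: imset_f|].
by rewrite hg // hg.
Qed.


Lemma conn_add n (e : rel 'I_n) (S : {set 'I_n}) v x y :
  symmetric e -> irreflexive e -> v \notin S ->
  (forall u w, u \in S -> w \in S -> e v u -> e v w -> conn e S u w) ->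
  x \in S -> conn e (v |: S) x y -> y \in S -> conn e S x y.
Proof.
move=> sym irr vS H xS cxy yS.
have cs := sym_connect_sym (induced_sym S sym).
pose P z := (z \in S -> conn e S x z) /\ (z = v -> forall u, u \in S -> e v u -> conn e S x u).
suff [] : P y by move=> ->.
apply: (conn_ind (P := P)) cxy; last first.
  by split=> // zv; move: xS; rewrite zv (negbTE vS).
move=> z z' [P1 P2] /and3P [ezz zS z'S]; split.
  move=> z'S'; case: (boolP (z \in S)) => zS'.
    apply: connect_trans (P1 zS') (connect1 _); by rewrite /induced_rel ezz zS' z'S'.
  move: zS; rewrite !inE (negbTE zS') orbF => /eqP zv.
  by apply: (P2 zv) => //; rewrite -zv.
move=> z'v u uS evu.
have zS' : z \in S.
  move: zS; rewrite !inE => /orP [/eqP zv|//]; by rewrite zv z'v irr in ezz.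
apply: connect_trans (P1 zS') _; apply: H => //; by rewrite -z'v sym.
Qed.

Lemma ncomp_add n (e : rel 'I_n) (S : {set 'I_n}) v :
  symmetric e -> irreflexive e -> v \notin S ->
  ncomp e (v |: S) < ncomp e S ->
  exists u w, [/\ u \in S, w \in S, e v u, e v w & ~~ conn e S u w].
Proof.
move=> sym irr vS lt; apply: NNPP => H; move: lt; apply/negP; rewrite -leqNgt.
have H' u w : u \in S -> w \in S -> e v u -> e v w -> conn e S u w.
  move=> uS wS evu evw; apply: NNPP => nc; apply: H; exists u, w; split=> //.
  by apply/negP.
rewrite /ncomp; apply: leq_trans (_ : #|comp_of e (v |: S) @: S| <= _).
  apply: card_le => x y xS yS /comp_eq h; apply/comp_eq => //.
  apply: (conn_add sym irr vS H' xS) => //; apply: h => //; rewrite inE ?xS ?yS orbT //.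
by apply/subset_leq_card/imsetS/subsetP => z zS; rewrite inE zS orbT.
Qed.

Lemma part1 n (e : rel 'I_n) (A : {set 'I_n}) :
  minimal_cut_set e A -> cut_point_sets e A.
Proof.
move=> /minsetP [cA minA]; apply/orP; right; apply/forall_inP => i iA.
rewrite /cut_vertex setU11 /=.
have -> : (i |: ~: A) :\ i = ~: A.
  by apply/setP => z; rewrite !inE; case: eqP => // ->; rewrite iA.
have -> : i |: ~: A = ~: (A :\ i).
  by apply/setP => z; rewrite !inE; case: eqP => // ->.
have : ~~ cut_set e (A :\ i).
  apply/negP => c; have := minA _ c (subD1set _ _).
  by move/setP/(_ i); rewrite !inE eqxx iA.
rewrite /cut_set /cG -leqNgt => h; exact: leq_ltn_trans h cA.
Qed.


Lemma exists_split n (e : rel 'I_n) (A : {set 'I_n}) :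
  symmetric e -> cut_set e A ->
  exists p1 p2, [/\ p1 \in ~: A, p2 \in ~: A, conn e setT p1 p2 & ~~ conn e (~: A) p1 p2].
Proof.
move=> sym cA; apply: NNPP => H; move: cA; apply/negP; rewrite -leqNgt /cG /cG0 /ncomp.
apply: leq_trans (_ : #|comp_of e setT @: ~: A| <= _); last first.
  by apply/subset_leq_card/imsetS/subsetP => z; rewrite inE.
apply: card_le => x y xA yA /comp_eq h; apply/comp_eq => //.
have := h sym (in_setT x) (in_setT y) => cT.
apply: NNPP => nc; apply: H; exists x, y; split => //; exact/negP.
Qed.

Definition touch n (e : rel 'I_n) (A : {set 'I_n}) p :=
  [set a in A | [exists c, [&& c \in ~: A, conn e (~: A) p c & e a c]]].

Lemma cut_touch n (e : rel 'I_n) (A : {set 'I_n}) p1 p2 :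
  symmetric e -> p1 \in ~: A -> p2 \in ~: A -> conn e setT p1 p2 ->
  ~~ conn e (~: A) p1 p2 -> cut_set e (touch e A p1).
Proof.
move=> sym p1A p2A cT nc.
set A' := touch e A p1.
have sA : A' \subset A by apply/subsetP => z; rewrite inE => /andP[].
have key z : conn e (~: A') p1 z -> z \in ~: A /\ conn e (~: A) p1 z.
  apply: (conn_ind (P := fun z => z \in ~: A /\ conn e (~: A) p1 z)); last first.
    by rewrite p1A connect0.
  move=> y y' [yA cy] /and3P [eyy _ y'A'].
  have y'A : y' \in ~: A.
    rewrite inE; apply/negP => y'A; move: y'A'; rewrite !inE y'A /=.
    by apply/negP/negPn/existsP; exists y; rewrite yA cy sym eyy.
  split => //; apply: connect_trans cy (connect1 _); by rewrite /induced_rel eyy yA y'A.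
have inA' z : z \in ~: A -> z \in ~: A'.
  rewrite inE => zA; rewrite inE; apply/negP => /(subsetP sA); exact/negP.
rewrite /cut_set /cG /cG0 /ncomp.
apply: (@leq_trans #|comp_of e setT @: ~: A'|.+1).
  rewrite ltnS; apply/subset_leq_card/subsetP => _ /imsetP [y _ ->].
  case: (boolP (y \in ~: A')) => yA'; first exact: imset_f.
  move: yA'; rewrite !inE negbK => /andP [yA /existsP [c /and3P [cA cc eyc]]].
  apply/imsetP; exists c; first exact: inA'.
  apply/comp_eq => //; apply: connect1; by rewrite /induced_rel eyc !inE.
apply: (card_lt (x0 := p1) (y0 := p2)).
- move=> x y xA yA /comp_eq h; apply/comp_eq => //.
  apply: (conn_mono (S := ~: A')); first exact: subsetT.
  exact: h.
- exact: inA'.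
- exact: inA'.
- by apply/comp_eq.
- apply/negP => /eqP /comp_eq h; have := h sym (inA' _ p1A) (inA' _ p2A).
  by move/key => [_ c]; rewrite c in nc.
Qed.

Lemma full n (e : rel 'I_n) (A : {set 'I_n}) :
  symmetric e -> minimal_cut_set e A ->
  exists p1 p2, [/\ p1 \in ~: A, p2 \in ~: A, ~~ conn e (~: A) p1 p2 &
    forall a, a \in A ->
      (exists c, [/\ c \in ~: A, conn e (~: A) p1 c & e a c]) /\
      (exists c, [/\ c \in ~: A, conn e (~: A) p2 c & e a c])].
Proof.
move=> sym /minsetP [cA minA].
have [p1 [p2 [p1A p2A cT nc]]] := exists_split sym cA.
have cs := sym_connect_sym (induced_sym setT sym).
have csA := sym_connect_sym (induced_sym (~: A) sym).
have T1 := cut_touch sym p1A p2A cT nc.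
have T2 : cut_set e (touch e A p2).
  by apply: (cut_touch sym p2A p1A); [rewrite cs | rewrite csA].
have sT p : touch e A p \subset A by apply/subsetP => z; rewrite inE => /andP[].
have E1 := minA _ T1 (sT _). have E2 := minA _ T2 (sT _).
exists p1, p2; split => // a aA; split.
  have : a \in touch e A p1 by rewrite E1.
  rewrite inE => /andP [_ /existsP [c /and3P [? ? ?]]]; by exists c; split.
have : a \in touch e A p2 by rewrite E2.
rewrite inE => /andP [_ /existsP [c /and3P [? ? ?]]]; by exists c; split.
Qed.


Definition chn n (e : rel 'I_n) (d : 'I_n) (s : seq 'I_n) :=
  forall k, k.+1 < size s -> e (nth d s k) (nth d s k.+1).

Definition walk n (e : rel 'I_n) (C : {set 'I_n}) a b (s : seq 'I_n) :=
  [/\ nth a s 0 = a, nth a s (size s).-1 = b, 3 <= size s, chn e a s &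
     forall k, 0 < k -> k < (size s).-1 -> nth a s k \in C].

Definition indp n (e : rel 'I_n) (a : 'I_n) (s : seq 'I_n) :=
  forall i j, i < j -> j < size s -> j != i.+1 ->
    ~~ ((i == 0) && (j == (size s).-1)) -> ~~ e (nth a s i) (nth a s j).

Lemma nth_sc (T : Type) (d : T) (s : seq T) k l t : k < l -> l < size s ->
  nth d (take k.+1 s ++ drop l s) t =
  if t <= k then nth d s t else nth d s (t - k.+1 + l).
Proof.
move=> kl ls; rewrite nth_cat size_takel; last by lia.
case: ifP => h.
  by rewrite ltnS in h; rewrite h nth_take.
rewrite ltnS in h; rewrite h nth_drop; congr nth; lia.
Qed.

Lemma size_sc (T : Type) (s : seq T) k l : k < l -> l < size s ->
  size (take k.+1 s ++ drop l s) = k.+1 + (size s - l).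
Proof. by move=> kl ls; rewrite size_cat size_takel ?size_drop //; lia. Qed.

Lemma shortcut n (e : rel 'I_n) C a b s k l :
  walk e C a b s -> k < l -> l < size s -> l != k.+1 ->
  ~~ ((k == 0) && (l == (size s).-1)) -> e (nth a s k) (nth a s l) ->
  walk e C a b (take k.+1 s ++ drop l s) /\ size (take k.+1 s ++ drop l s) < size s.
Proof.
move=> [h0 hl h3 hc hi] kl ls lk nb ekl.
have sz := size_sc kl ls.
split; last by rewrite sz; lia.
split.
- by rewrite nth_sc.
- rewrite nth_sc // sz; case: ifP => h; first lia.
  by rewrite -hl; congr nth; lia.
- rewrite sz; lia.
- move=> t; rewrite sz => ht; rewrite !nth_sc //.
  case: (ltngtP t k) => htk.
  + apply: hc; lia.
  + have -> : t.+1 - k.+1 + l = (t - k.+1 + l).+1 by lia.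
    apply: hc; lia.
  + rewrite htk.
    have -> : k.+1 - k.+1 + l = l by lia.
    exact: ekl.
- move=> t; rewrite sz => t0 ht; rewrite nth_sc //.
  case: ifP => h; apply: hi; lia.
Qed.


Lemma not_indp n (e : rel 'I_n) a s : ~ indp e a s ->
  exists i j, [/\ i < j, j < size s, j != i.+1,
    ~~ ((i == 0) && (j == (size s).-1)) & e (nth a s i) (nth a s j)].
Proof.
move=> H; apply: NNPP => H'; apply: H => i j h1 h2 h3 h4; apply/negP => he.
by apply: H'; exists i, j; split.
Qed.

Lemma best_walk n (e : rel 'I_n) (C : {set 'I_n}) (a b : 'I_n) s :
  a \notin C -> b \notin C -> a != b -> walk e C a b s ->
  exists s', [/\ walk e C a b s', uniq s' & indp e a s'].
Proof.
move=> aC bC ab.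
suff H : forall m s, size s <= m -> walk e C a b s ->
  exists s', [/\ walk e C a b s', uniq s' & indp e a s'] by exact: H.
elim=> [|m IH] {}s hs w; first by case: w => _ _ h3 _ _; lia.
case: (boolP (uniq s)) => us; last first.
  case/(uniqPn a): us => i [j [ij js0 eqij]].
  have js : j < size s := js0; clear js0.
  case: (w) => h0 hl h3 hc hi.
  have i0 : 0 < i.
    case: (posnP i) => // i0; move: eqij; rewrite i0 h0 => eqij.
    case: (ltnP j (size s).-1) => hj.
      by move: (hi j (ltac:(lia)) hj); rewrite -eqij (negbTE aC).
    have : j = (size s).-1.
    lia.
    by move=> jl; move: ab; rewrite eqij jl hl eqxx.
  have nb : ~~ ((i.-1 == 0) && (j == (size s).-1)).
    apply/negP => /andP [/eqP i1 /eqP jl].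
    have : nth a s i \in C by apply: hi; lia.
    by rewrite eqij jl hl (negbTE bC).
  have := @shortcut n e C a b s i.-1 j w.
  case => //; try lia.
  - rewrite -eqij; have := hc i.-1; rewrite prednK //; apply; lia.
  move=> w' sz; apply: (IH _ _ w'); lia.
case: (classic (indp e a s)) => ind; first by exists s.
case: (not_indp ind) => i [j [ij js ji nb eij]].
have [w' sz] := shortcut w ij js ji nb eij.
apply: (IH _ _ w'); lia.
Qed.

Lemma walk_exists n (e : rel 'I_n) (S C : {set 'I_n}) a b c1 c2 :
  symmetric e -> e a c1 -> e b c2 -> conn e S c1 c2 ->
  (forall z, conn e S c1 z -> z \in C) -> exists s, walk e C a b s.
Proof.
move=> sym ac1 bc2 /connectP [p pth c2l] hC.
exists (a :: rcons (c1 :: p) b).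
have sz : size (a :: rcons (c1 :: p) b) = (size p).+3 by rewrite /= size_rcons.
split.
- by [].
- by rewrite sz /= nth_rcons /= ltnn eqxx.
- by rewrite sz.
- move=> k; rewrite sz => hk; case: k hk => [|k] hk /=; first by [].
  have : path e c1 (rcons p b).
    rewrite rcons_path -c2l sym bc2 andbT; apply: sub_path pth => x y /and3P[] //.
  move/(pathP a) => /(_ k); rewrite size_rcons; apply; rewrite !ltnS in hk; exact: hk.
- move=> k k0; rewrite sz /= => hk; case: k k0 hk => [|k] // _ hk /=.
  rewrite -[c1 :: rcons p b]/(rcons (c1 :: p) b) nth_rcons /= ifT; last by rewrite !ltnS in hk *.
  apply: hC; apply: (path_connect pth); apply: mem_nth; by rewrite !ltnS in hk *.
Qed.


Lemma chordal_use n (e : rel 'I_n) d s : chordal e -> uniq s -> 4 <= size s ->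
  chn e d s -> e (nth d s (size s).-1) (nth d s 0) ->
  exists i j, [/\ i < j, j < size s, j != i.+1,
    ~~ ((i == 0) && (j == (size s).-1)) & e (nth d s i) (nth d s j)].
Proof.
move=> ch; case: s => [|x p] // us s4 hc hl.
have cyc : cycle e (x :: p).
  rewrite /cycle; apply/(pathP d) => i; rewrite size_rcons => hi.
  rewrite -[x :: rcons p x]/(rcons (x :: p) x) !nth_rcons /= hi.
  case: (ltnP i (size p)) => h.
    by apply: (hc i); rewrite /= ltnS.
  have ei : i = size p by apply/eqP; rewrite eqn_leq -ltnS hi h.
  rewrite ei eqxx; exact: hl.
have [i [j [ij js ji nb eij]]] := ch x p us s4 cyc.
exists i, j; split => //.
have hi : i < size (x :: p) := ltn_trans ij js.
by rewrite (set_nth_default x d hi) (set_nth_default x d js).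
Qed.

Lemma uniq_nth (T : eqType) (d : T) s i j : uniq s -> i < j -> j < size s ->
  nth d s i != nth d s j.
Proof.
move=> us ij js; apply/negP => /eqP h.
have : ~~ uniq s by apply/(uniqPn d); exists i, j.
by rewrite us.
Qed.

Lemma common_nbr n (e : rel 'I_n) (C : {set 'I_n}) a b s :
  chordal e -> symmetric e -> a \notin C -> b \notin C -> a != b -> e a b ->
  walk e C a b s -> exists z, [/\ z \in C, e a z & e b z].
Proof.
move=> ch sym aC bC ab eab w0.
have [s' [w us ind]] := best_walk aC bC ab w0.
case: w => h0 hl h3 hc hi.
case: (ltnP 3 (size s')) => h4.
  have [i [j [ij js ji nb eij]]] := chordal_use ch us h4 hc (ltac:(by rewrite hl h0 sym)).
  by move: (ind i j ij js ji nb); rewrite eij.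
have sz : size s' = 3 by lia.
exists (nth a s' 1); split.
- apply: hi; rewrite ?sz //.
- by have := hc 0; rewrite h0; apply; rewrite sz.
- move: hl; rewrite sz /= => hl; have := hc 1; rewrite hl sym; apply; by rewrite sz.
Qed.


Ltac nlia := repeat match goal with
  | H : ?T |- _ => lazymatch T with
      | is_true (leq _ _) => fail
      | is_true (negb (_ && _)) => fail
      | is_true (negb (@eq_op _ _ _)) => fail
      | @eq nat _ _ => fail
      | nat => fail
      | _ => clear H end
  end; lia.

Lemma clique2 n (e : rel 'I_n) (C1 C2 : {set 'I_n}) a b s1 s2 :
  chordal e -> symmetric e -> a \notin C1 -> b \notin C1 -> a \notin C2 ->
  b \notin C2 -> a != b ->
  (forall z, z \in C1 -> z \in C2 -> False) ->
  (forall u v, u \in C1 -> v \in C2 -> ~~ e u v) ->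
  walk e C1 a b s1 -> walk e C2 b a s2 -> e a b.
Proof.
move=> ch sym aC1 bC1 aC2 bC2 ab disj noE w01 w02.
case: (boolP (e a b)) => // nab; exfalso.
have [t1 [w1 u1 i1]] := best_walk aC1 bC1 ab w01.
have [t2 [w2 u2 i2]] := best_walk bC2 aC2 (ltac:(by rewrite eq_sym)) w02.
case: w1 => h10 h1l h13 hc1 hi1; case: w2 => h20 h2l h23 hc2 hi2.
set m1 := size t1 in h1l h13 hi1 i1.
set m2 := size t2 in h2l h23 hi2 i2.
set s := t1 ++ drop 1 (take m2.-1 t2).
have sz : size s = m1 + m2 - 2.
  rewrite size_cat size_drop size_takel; rewrite /m1 /m2; nlia.
have F1 t : t < m1 -> nth a s t = nth a t1 t by move=> h; rewrite nth_cat h.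
have F2 t : m1.-1 <= t -> t < size s -> nth a s t = nth b t2 (t - m1.-1).
  move=> h1 h2; case: (ltnP t m1) => h3.
    have -> : t = m1.-1 by nlia.
    by rewrite F1 ?h1l ?subnn ?h20 //; nlia.
  rewrite nth_cat ltnNge h3 /= nth_drop nth_take; last by nlia.
  rewrite (@set_nth_default _ _ b a); last by rewrite -/m2; nlia.
  congr nth; nlia.
have us : uniq s.
  apply/negPn/negP => /(uniqPn a) [i [j [ij js0 eij]]].
  have js : j < size s := js0; clear js0.
  case: (ltnP j m1) => hj.
    by move: (uniq_nth a u1 ij hj); rewrite -!F1 ?eij ?eqxx //; nlia.
  case: (leqP m1.-1 i) => hi.
    move: eij; rewrite !F2 //; try nlia.
    apply/eqP; apply: uniq_nth => //; rewrite -/m2; nlia.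
  case: (posnP i) => i0.
    move: eij; rewrite i0 F1 ?h10 ?F2 //; try nlia.
    rewrite -{1}h2l => eij.
    have : nth b t2 (j - m1.-1) != nth b t2 m2.-1 by apply: uniq_nth => //; rewrite -/m2; nlia.
    by rewrite eij eqxx.
  apply: (disj (nth a s i)).
    rewrite F1; last nlia. apply: hi1; nlia.
  rewrite eij F2 //; last nlia. apply: hi2; nlia.
have s4 : 4 <= size s by rewrite sz; nlia.
have hc : chn e a s.
  move=> t ht; case: (ltnP t.+1 m1) => h.
    have g1 : t < m1 by nlia.
    rewrite (F1 t g1) (F1 t.+1 h). apply: hc1; nlia.
  have g1 : m1.-1 <= t by nlia.
  have g2 : t < size s by nlia.
  have g3 : m1.-1 <= t.+1 by nlia.
  rewrite (F2 t g1 g2) (F2 t.+1 g3 ht).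
  have -> : t.+1 - m1.-1 = (t - m1.-1).+1 by nlia.
  apply: hc2; nlia.
have hl : e (nth a s (size s).-1) (nth a s 0).
  rewrite (F1 0); last nlia.
  have hs1 : m1.-1 <= (size s).-1 by nlia.
  have hs2 : (size s).-1 < size s by nlia.
  rewrite (F2 _ hs1 hs2) h10 -[X in e _ X]h2l.
  have -> : m2.-1 = ((size s).-1 - m1.-1).+1 by rewrite sz; nlia.
  apply: hc2; rewrite -/m2 sz; nlia.
have [i [j [ij js0 ji nb eij]]] := chordal_use ch us s4 hc hl.
have js : j < size s := js0; clear js0.
case: (ltnP j m1) => hj.
  have hi' : i < m1 by clear -ij hj; nlia.
  move: eij; rewrite (F1 i hi') (F1 j hj).
  case: (boolP ((i == 0) && (j == m1.-1))) => h.
    by move/andP: h => [/eqP -> /eqP ->]; rewrite h10 h1l (negbTE nab).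
  by move=> eij; move: (i1 i j ij hj ji h); rewrite eij.
have hj1 : m1.-1 <= j by clear -hj; nlia.
case: (leqP m1.-1 i) => hi.
  have is' : i < size s by clear -ij js; nlia.
  move: eij; rewrite (F2 i hi is') (F2 j hj1 js) => eij.
  have c1 : i - m1.-1 < j - m1.-1 by clear -ij hi; nlia.
  have c2 : j - m1.-1 < size t2 by rewrite -/m2; clear -js sz h13 h23 hj1; nlia.
  have c3 : j - m1.-1 != (i - m1.-1).+1 by clear -ji hi ij; nlia.
  have c4 : ~~ ((i - m1.-1 == 0) && (j - m1.-1 == m2.-1)) by clear -js sz h13 h23 hi ij; nlia.
  by move: (i2 _ _ c1 c2 c3 c4); rewrite eij.
case: (posnP i) => i0.
  have h0m : 0 < m1 by clear -h13; nlia.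
  move: eij; rewrite i0 (F1 0 h0m) h10 (F2 j hj1 js) -{1}h2l sym => eij.
  have c1 : j - m1.-1 < m2.-1 by clear -js sz h13 h23 hj; nlia.
  have c2 : m2.-1 < size t2 by rewrite -/m2; clear -h23; nlia.
  have c3 : m2.-1 != (j - m1.-1).+1.
    have := nb; rewrite sz i0 => nb'; clear -nb' js sz h13 h23 hj; nlia.
  have c4 : ~~ ((j - m1.-1 == 0) && (m2.-1 == m2.-1)) by clear -hj h13; nlia.
  by move: (i2 _ _ c1 c2 c3 c4); rewrite eij.
have hi' : i < m1 by clear -hi; nlia.
have hC1 : nth a s i \in C1.
  rewrite (F1 i hi'); apply: hi1; [exact: i0 | exact: hi].
have hC2 : nth a s j \in C2.
  rewrite (F2 j hj1 js); apply: hi2; clear -hj js sz h13 h23; nlia.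
by move: (noE _ _ hC1 hC2); rewrite eij.
Qed.


Lemma clique_edge n (e : rel 'I_n) K u v : clique e K -> u \in K -> v \in K -> u != v -> e u v.
Proof. by move=> /forall_inP /(_ u) h uK vK uv; move/forall_inP: (h uK) => /(_ v vK) /implyP; apply. Qed.

Lemma clique3 n (e : rel 'I_n) a b c : symmetric e -> e a b -> e a c -> e b c ->
  clique e [set a; b; c].
Proof.
move=> sym ab ac bc; apply/forall_inP => u; rewrite !inE => /orP [/orP [] |] /eqP ->;
apply/forall_inP => v; rewrite !inE => /orP [/orP [] |] /eqP -> ; rewrite ?eqxx //=; apply/implyP => _;
by rewrite // sym.
Qed.

Lemma clique2s n (e : rel 'I_n) a b : symmetric e -> e a b -> clique e [set a; b].
Proof.
move=> sym ab; apply/forall_inP => u; rewrite !inE => /orP [] /eqP ->;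
apply/forall_inP => v; rewrite !inE => /orP [] /eqP -> ; rewrite ?eqxx //=; apply/implyP => _;
by rewrite // sym.
Qed.

Lemma edge_conn n (e : rel 'I_n) (S : {set 'I_n}) u v : u \in S -> v \in S -> e u v -> conn e S u v.
Proof. by move=> uS vS euv; apply: connect1; rewrite /induced_rel euv uS vS. Qed.

Theorem lemma3p1 (n : nat) (e : rel 'I_n) (A : {set 'I_n}) :
  simple_graph e -> minimal_cut_set e A ->
  cut_point_sets e A /\
  (generalized_block_graph e ->
   forall T : {set 'I_n}, cut_point_sets e T -> A \subset T \/ A :&: T = set0).
Proof.
move=> [sym irr] mA; split; first exact: part1.
move=> [ch gb] T cT.
case: (boolP (A \subset T)) => sAT; [by left | right].
case: (set_0Vmem (A :&: T)) => [//|[i]]; rewrite inE => /andP [iA iT]; exfalso.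
case/subsetPn: sAT => j jA jT.
have csT := sym_connect_sym (induced_sym (~: T) sym).
have csA := sym_connect_sym (induced_sym (~: A) sym).
have jT' : j \in ~: T by rewrite inE.
have [x [xT eix njx]] : exists x, [/\ x \in ~: T, e i x & ~~ conn e (~: T) j x].
  have cpp : cut_point_property e T.
    move: cT; rewrite /cut_point_sets; case/orP => // /eqP T0.
    by move: iT; rewrite T0 inE.
  move/forall_inP: cpp => /(_ i iT); rewrite /cut_vertex => /andP [_].
  have -> : (i |: ~: T) :\ i = ~: T.
    by apply/setP => z; rewrite !inE; case: eqP => // ->; rewrite iT.
  have iT' : i \notin ~: T by rewrite inE iT.
  case/(ncomp_add sym irr iT') => u [w [uT wT eiu eiw nuw]].
  case: (boolP (conn e (~: T) j u)) => hju.
    exists w; split => //; apply/negP => hjw; move/negP: nuw; apply.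
    by rewrite csT in hju; exact: connect_trans hju hjw.
  by exists u.
have [p1 [p2 [p1A p2A np12 hfull]]] := full sym mA.
pose C1 := comp_of e (~: A) p1.
pose C2 := comp_of e (~: A) p2.
have notC a p : a \in A -> a \notin comp_of e (~: A) p by move=> aA; rewrite !inE aA.
have disj : forall z, z \in C1 -> z \in C2 -> False.
  move=> z; rewrite !inE => /andP [_ h1] /andP [_ h2]; move/negP: np12; apply.
  by rewrite csA in h2; exact: connect_trans h1 h2.
have noE : forall u v, u \in C1 -> v \in C2 -> ~~ e u v.
  move=> u v; rewrite !inE => /andP [uA h1] /andP [vA h2]; apply/negP => euv.
  move/negP: np12; apply; rewrite csA in h2.
  have uA' : u \in ~: A by rewrite inE.
  have vA' : v \in ~: A by rewrite inE.
  exact: connect_trans (connect_trans h1 (edge_conn uA' vA' euv)) h2.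
have wk : forall p a b, p \in ~: A -> a \in A -> b \in A ->
    (forall a, a \in A -> exists c, [/\ c \in ~: A, conn e (~: A) p c & e a c]) ->
    exists s, walk e (comp_of e (~: A) p) a b s.
  move=> p a b pA aA bA hp.
  have [c1 [c1A pc1 ac1]] := hp a aA.
  have [c2 [c2A pc2 bc2]] := hp b bA.
  apply: (walk_exists (S := ~: A) (c1 := c1) (c2 := c2)) => //.
    by rewrite csA in pc1; exact: connect_trans pc1 pc2.
  move=> z cz; rewrite inE (conn_in c1A cz) /=; exact: connect_trans pc1 cz.
have h1 : forall a, a \in A -> exists c, [/\ c \in ~: A, conn e (~: A) p1 c & e a c].
  by move=> a aA; case: (hfull a aA).
have h2 : forall a, a \in A -> exists c, [/\ c \in ~: A, conn e (~: A) p2 c & e a c].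
  by move=> a aA; case: (hfull a aA).
have cliq : forall a b, a \in A -> b \in A -> a != b -> e a b.
  move=> a b aA bA ab.
  have [s1 w1] := wk _ _ _ p1A aA bA h1.
  have [s2 w2] := wk _ _ _ p2A bA aA h2.
  exact: (clique2 ch sym (notC _ _ aA) (notC _ _ bA) (notC _ _ aA) (notC _ _ bA) ab disj noE w1 w2).
have ij : i != j by apply/eqP => ij; move: jT; rewrite -ij iT.
have eij := cliq _ _ iA jA ij.
case: (boolP (x \in A)) => xA.
  have xj : x != j by apply/eqP => xj; move: njx; rewrite xj connect0.
  have exj := cliq _ _ xA jA xj.
  by move/negP: njx; apply; apply: edge_conn => //; rewrite sym.
have xA' : x \in ~: A by rewrite inE.
have [z [w [zA wA [eiz ejz eiw ejw] nzx nzw]]] :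
    exists z w, [/\ z \in ~: A, w \in ~: A, [/\ e i z, e j z, e i w & e j w],
      ~~ conn e (~: A) z x & ~~ conn e (~: A) z w].
  have cn : forall p, p \in ~: A ->
      (forall a, a \in A -> exists c, [/\ c \in ~: A, conn e (~: A) p c & e a c]) ->
      exists z, [/\ z \in ~: A, conn e (~: A) p z, e i z & e j z].
    move=> p pA hp; have [s w] := wk _ _ _ pA iA jA hp.
    have [z [zC eiz ejz]] := common_nbr ch sym (notC _ _ iA) (notC _ _ jA) ij eij w.
    by move: zC; rewrite inE => /andP [zA pz]; exists z.
  have [z1 [z1A pz1 eiz1 ejz1]] := cn _ p1A h1.
  have [z2 [z2A pz2 eiz2 ejz2]] := cn _ p2A h2.
  have nz12 : ~~ conn e (~: A) z1 z2.
    apply/negP => c; move/negP: np12; apply; rewrite csA in pz2.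
    exact: connect_trans (connect_trans pz1 c) pz2.
  case: (boolP (conn e (~: A) p1 x)) => px.
    exists z2, z1; split => //; last by rewrite csA.
    apply/negP => c; move/negP: np12; apply; rewrite csA.
    apply: connect_trans pz2 (connect_trans c _); by rewrite csA.
  exists z1, z2; split => //.
  apply/negP => c; move/negP: px; apply; exact: connect_trans pz1 c.
have [Fa fa sa] := maxset_exists (clique3 sym eij eiz ejz).
have [Fb fb sb] := maxset_exists (clique3 sym eij eiw ejw).
have [Fc fc sc] := maxset_exists (clique2s sym eix).
have inF (F : {set 'I_n}) (u : 'I_n) (K : {set 'I_n}) : K \subset F -> u \in K -> u \in F.
  by move=> sKF uK; apply: (subsetP sKF).
have iFa : i \in Fa by apply: inF sa _; rewrite !inE eqxx.
have jFa : j \in Fa by apply: inF sa _; rewrite !inE eqxx orbT.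
have zFa : z \in Fa by apply: inF sa _; rewrite !inE eqxx !orbT.
have iFb : i \in Fb by apply: inF sb _; rewrite !inE eqxx.
have jFb : j \in Fb by apply: inF sb _; rewrite !inE eqxx orbT.
have wFb : w \in Fb by apply: inF sb _; rewrite !inE eqxx !orbT.
have iFc : i \in Fc by apply: inF sc _; rewrite !inE eqxx.
have xFc : x \in Fc by apply: inF sc _; rewrite !inE eqxx orbT.
have jFc : j \notin Fc.
  apply/negP => jF.
  have jx : j != x by apply/eqP => jx; move: njx; rewrite jx connect0.
  move/negP: njx; apply; apply: edge_conn => //.
  exact: clique_edge (maxsetp fc) jF xFc jx.
have dab : Fa != Fb.
  apply/eqP => E; have zw : z != w by apply/eqP => zw; move: nzw; rewrite zw connect0.
  move/negP: nzw; apply; apply: edge_conn => //.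
  apply: clique_edge (maxsetp fa) zFa _ zw; by rewrite E.
have dac : Fa != Fc.
  apply/eqP => E; have zx : z != x by apply/eqP => zx; move: nzx; rewrite zx connect0.
  move/negP: nzx; apply; apply: edge_conn => //.
  apply: clique_edge (maxsetp fa) zFa _ zx; by rewrite E.
have dbc : Fb != Fc by apply/eqP => E; move: jFc; rewrite -E jFb.
have ne : Fa :&: Fb :&: Fc != set0.
  by apply/set0Pn; exists i; rewrite !inE iFa iFb iFc.
have [E1 _] := gb _ _ _ fa fb fc dab dac dbc ne.
have : j \in Fa :&: Fb by rewrite inE jFa jFb.
by rewrite E1 inE (negbTE jFc) andbF.
Qed.
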